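(* Let $G$ be a group satisfying the property $\mathsf{FM}$ and $\nu$ a conjugation-invariant pseudo-norm on $G$. Then for any elements $\mathsf{f},\mathsf{g}$ of $A_\nu$, $\mathsf{f}+\mathsf{g}=\mathsf{g}+\mathsf{f}$.
   Context: A conjugation-invariant pseudo-norm on a group $G$ is a function $\nu\colon G\to\mathbb{R}_{\ge0}$ with $\nu(1)=0$, $\nu(f)=\nu(f^{-1})$, $\nu(fg)\le\nu(f)+\nu(g)$ and $\nu(gfg^{-1})=\nu(f)$ for all $f,g\in G$. Property $\mathsf{FM}$: for a subgroup $H\le G$, let $\nu_H(f)$ be the minimal $k$ such that $f=g_1h_1g_1^{-1}\cdots g_kh_kg_k^{-1}$ ($g_i\in G,h_i\in H$), $\infty$ if none; for $K\subset G$ let $\mathrm{D}^f_H(K)$ be the set of $h_0\in G$ such that for all $g_1,\dots,g_k\in G$ there is $h\in G$ with every element of $hh_0h^{-1}K(hh_0h^{-1})^{-1}$ commuting with every element of $\bigcup_i g_iHg_i^{-1}$. $(G,H)$ satisfies $\mathsf{FM}$ if $\nu_H<\infty$ on $G$ and $\mathrm{D}^f_H(h_1Hh_1^{-1}\cup\dots\cup h_kHh_k^{-1})\ne\emptyset$ for all $h_1,\dots,h_k\in G$; $G$ satisfies $\mathsf{FM}$ if some $(G,H)$ does. $A_G=\coprod_{k\ge0}(G\times\mathbb{R})^k$, elements written as formal words $g_1^{s_1}\cdots g_k^{s_k}$, empty word $1$; $\mathtt{g}\cdot\mathtt{h}$ is concatenation, $\bar{\mathtt{g}}=g_k^{-s_k}\cdots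 g_1^{-s_1}$; $\|\mathtt{g}\|_\nu=\lim_{n\to\infty}\frac1n\nu(g_1^{[s_1n]}\cdots g_k^{[s_kn]})$ ($[\cdot]$ integer part), $\|1\|_\nu=0$; $\mathtt{g}\sim\mathtt{h}$ iff $\|\mathtt{g}\cdot\bar{\mathtt{h}}\|_\nu=0$; $A_\nu=A_G/\sim$ with addition $[\mathtt{g}]+[\mathtt{h}]=[\mathtt{g}\cdot\mathtt{h}]$. *)

(* Defs.v *)
From Stdlib Require Import Reals List ZArith.
From Coquelicot Require Import Coquelicot.
Open Scope R_scope.

Record Group := {
  gcar :> Type;
  gmul : gcar -> gcar -> gcar;
  ginv : gcar -> gcar;
  gone : gcar;
  gmulA : forall x y z, gmul x (gmul y z) = gmul (gmul x y) z;
  gmul1l : forall x, gmul gone x = x;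
  gmul1r : forall x, gmul x gone = x;
  gmulVl : forall x, gmul (ginv x) x = gone;
  gmulVr : forall x, gmul x (ginv x) = gone
}.

Arguments gmul {g}.
Arguments ginv {g}.
Arguments gone {g}.

Definition gconj {G : Group} (a x : G) : G := gmul a (gmul x (ginv a)).

Definition gcommute {G : Group} (x y : G) : Prop := gmul x y = gmul y x.

Definition gpowZ {G : Group} (g : G) (z : Z) : G :=
  match z with
  | Z0 => gone
  | Zpos p => Nat.iter (Pos.to_nat p) (gmul g) gone
  | Zneg p => ginv (Nat.iter (Pos.to_nat p) (gmul g) gone)
  end.

Definition cinv_pseudonorm (G : Group) (nu : G -> R) : Prop :=
  (forall f, 0 <= nu f) /\
  nu gone = 0 /\
  (forall f, nu f = nu (ginv f)) /\
  (forall f g, nu (gmul f g) <= nu f + nu g) /\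
  (forall f g, nu (gconj g f) = nu f).

Definition is_subgroup (G : Group) (H : G -> Prop) : Prop :=
  H gone /\ (forall x y, H x -> H y -> H (gmul x y)) /\ (forall x, H x -> H (ginv x)).

Definition conj_prod {G : Group} (l : list (G * G)) : G :=
  fold_right (fun p acc => gmul (gconj (fst p) (snd p)) acc) gone l.

(* nu_H(f) < infinity *)
Definition nuH_finite (G : Group) (H : G -> Prop) (f : G) : Prop :=
  exists l : list (G * G), List.Forall (fun p => H (snd p)) l /\ f = conj_prod l.

Definition conj_union {G : Group} (H : G -> Prop) (gs : list G) (y : G) : Prop :=
  exists gi h, In gi gs /\ H h /\ y = gconj gi h.

Definition Df (G : Group) (H : G -> Prop) (K : G -> Prop) (h0 : G) : Prop :=
  forall gs : list G, exists h : G,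
    forall x y, K x -> conj_union H gs y ->
      gcommute (gconj (gconj h h0) x) y.

Definition FM_pair (G : Group) (H : G -> Prop) : Prop :=
  is_subgroup G H /\
  (forall f : G, nuH_finite G H f) /\
  (forall hs : list G, exists h0 : G, Df G H (conj_union H hs) h0).

Definition satisfies_FM (G : Group) : Prop := exists H : G -> Prop, FM_pair G H.

(* A_G : formal words g_1^{s_1} ... g_k^{s_k} *)
Definition word (G : Group) := list (G * R).

Definition wbar {G : Group} (w : word G) : word G :=
  rev (map (fun p => (fst p, - snd p)) w).

Definition weval {G : Group} (w : word G) (n : nat) : G :=
  fold_right (fun p acc => gmul (gpowZ (fst p) (Int_part (snd p * INR n))) acc) gone w.

Definition wnorm_zero (G : Group) (nu : G -> R) (w : word G) : Prop :=
  is_lim_seq (fun n => nu (weval w n) / INR n) 0.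

Definition wsim (G : Group) (nu : G -> R) (w v : word G) : Prop :=
  wnorm_zero G nu (w ++ wbar v).

(* Main.v *)
Require Import Defs.
From Stdlib Require Import Reals List ZArith Lia Lra.
From Coquelicot Require Import Coquelicot.

Lemma mulKl {G : Group} (x y : G) : gmul (ginv x) (gmul x y) = y.
Proof. rewrite gmulA, gmulVl, gmul1l. reflexivity. Qed.
Lemma mulKr {G : Group} (x y : G) : gmul x (gmul (ginv x) y) = y.
Proof. rewrite gmulA, gmulVr, gmul1l. reflexivity. Qed.
Lemma mulKVr {G : Group} (x y : G) : gmul (gmul x y) (ginv y) = x.
Proof. rewrite <- gmulA, gmulVr, gmul1r. reflexivity. Qed.
Lemma mulVKr {G : Group} (x y : G) : gmul (gmul x (ginv y)) y = x.
Proof. rewrite <- gmulA, gmulVl, gmul1r. reflexivity. Qed.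
Lemma inv_uniq {G : Group} (x y : G) : gmul x y = gone -> ginv x = y.
Proof. intro H. rewrite <- (gmul1r _ (ginv x)), <- H, gmulA, gmulVl, gmul1l. reflexivity. Qed.
Lemma invK {G : Group} (x : G) : ginv (ginv x) = x.
Proof. apply inv_uniq; apply gmulVl. Qed.
Lemma invM {G : Group} (x y : G) : ginv (gmul x y) = gmul (ginv y) (ginv x).
Proof. apply inv_uniq. rewrite gmulA, <- (gmulA _ x y), gmulVr, gmul1r, gmulVr. reflexivity. Qed.
Lemma inv1 {G : Group} : ginv (@gone G) = gone.
Proof. apply inv_uniq; apply gmul1l. Qed.

Inductive gen {G : Group} (S : G -> Prop) : G -> Prop :=
| gen_base x : S x -> gen S x
| gen_one : gen S gone
| gen_mul x y : gen S x -> gen S y -> gen S (gmul x y)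
| gen_inv x : gen S x -> gen S (ginv x).

Lemma gen_ind' {G : Group} (S P : G -> Prop) :
  P gone -> (forall x y, P x -> P y -> P (gmul x y)) -> (forall x, P x -> P (ginv x)) ->
  (forall x, S x -> P x) -> forall x, gen S x -> P x.
Proof. intros H1 H2 H3 H4 x Hx; induction Hx; auto. Qed.

Lemma gen_mono {G : Group} (S T : G -> Prop) : (forall x, S x -> T x) -> forall x, gen S x -> gen T x.
Proof. intros HST. apply gen_ind'; intros. apply gen_one. apply gen_mul; auto. apply gen_inv; auto. apply gen_base; auto. Qed.

Lemma comm_one {G : Group} (y : G) : gcommute gone y.
Proof. unfold gcommute; rewrite gmul1l, gmul1r; auto. Qed.
Lemma comm_mul {G : Group} (a b y : G) : gcommute a y -> gcommute b y -> gcommute (gmul a b) y.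
Proof. unfold gcommute; intros Ha Hb. rewrite <- gmulA, Hb, gmulA, Ha, <- gmulA. reflexivity. Qed.
Lemma comm_inv {G : Group} (a y : G) : gcommute a y -> gcommute (ginv a) y.
Proof. unfold gcommute; intros H.
  transitivity (gmul (ginv a) (gmul (gmul y a) (ginv a))).
  - rewrite mulKVr; reflexivity.
  - rewrite <- H, <- (gmulA _ a y), mulKl. reflexivity. Qed.
Lemma comm_sym {G : Group} (a y : G) : gcommute a y -> gcommute y a.
Proof. unfold gcommute; auto. Qed.

Lemma gconj_one {G : Group} (c : G) : gconj c gone = gone.
Proof. unfold gconj; rewrite gmul1l, gmulVr; reflexivity. Qed.
Lemma gconj_mul {G : Group} (c x y : G) : gconj c (gmul x y) = gmul (gconj c x) (gconj c y).
Proof. unfold gconj. rewrite !gmulA, mulVKr. reflexivity. Qed.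
Lemma gconj_inv {G : Group} (c x : G) : gconj c (ginv x) = ginv (gconj c x).
Proof. unfold gconj. rewrite !invM, invK, !gmulA. reflexivity. Qed.

Lemma iter_pow {G : Group} (x : G) n :
  Nat.iter (S n) (gmul x) gone = gmul (Nat.iter n (gmul x) gone) x.
Proof. induction n; simpl. rewrite gmul1r, gmul1l; reflexivity.
  simpl in IHn. rewrite IHn at 1. rewrite gmulA. reflexivity. Qed.

Lemma gpowZ_nat {G : Group} (x : G) n : gpowZ x (Z.of_nat n) = Nat.iter n (gmul x) gone.
Proof. destruct n. reflexivity. simpl. rewrite SuccNat2Pos.id_succ. reflexivity. Qed.

Lemma gpowZ_negnat {G : Group} (x : G) n : gpowZ x (- Z.of_nat n)%Z = ginv (Nat.iter n (gmul x) gone).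
Proof. destruct n. simpl. rewrite inv1; reflexivity. simpl. rewrite SuccNat2Pos.id_succ. reflexivity. Qed.

Lemma Z_cases (z : Z) : exists n, z = Z.of_nat n \/ z = (- Z.of_nat (S n))%Z.
Proof. destruct (Z_le_gt_dec 0 z).
  exists (Z.to_nat z). left. lia.
  exists (pred (Z.to_nat (- z))). right. lia. Qed.

Lemma gpowZ_succ {G : Group} (x : G) z : gpowZ x (z + 1) = gmul (gpowZ x z) x.
Proof. destruct (Z_cases z) as [n [-> | ->]].
  - replace (Z.of_nat n + 1)%Z with (Z.of_nat (S n)) by lia.
    rewrite !gpowZ_nat, iter_pow. reflexivity.
  - replace (- Z.of_nat (S n) + 1)%Z with (- Z.of_nat n)%Z by lia.
    rewrite !gpowZ_negnat. simpl Nat.iter at 2. rewrite invM, mulVKr. reflexivity.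
Qed.

Lemma gpowZ_pred {G : Group} (x : G) z : gpowZ x (z - 1) = gmul (gpowZ x z) (ginv x).
Proof. replace z with ((z - 1) + 1)%Z at 2 by lia. rewrite gpowZ_succ, mulKVr. reflexivity. Qed.

Lemma gpowZ_add {G : Group} (x : G) a b : gpowZ x (a + b) = gmul (gpowZ x a) (gpowZ x b).
Proof. revert a. induction b using Z.peano_ind; intro a.
  - rewrite Z.add_0_r. simpl. rewrite gmul1r. reflexivity.
  - rewrite <- !Z.add_1_r, Z.add_assoc, !gpowZ_succ, IHb, gmulA. reflexivity.
  - rewrite <- !Z.sub_1_r, Z.add_sub_assoc, !gpowZ_pred, IHb, gmulA. reflexivity.
Qed.

Lemma gen_gpowZ {G : Group} (S : G -> Prop) x z : gen S x -> gen S (gpowZ x z).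
Proof. intro Hx.
  assert (Hn : forall n, gen S (Nat.iter n (gmul x) gone)).
  { induction n; simpl. apply gen_one. apply gen_mul; auto. }
  destruct z; simpl; auto. apply gen_one. apply gen_inv; auto. Qed.

Lemma nu_inv {G : Group} nu (Hnu : cinv_pseudonorm G nu) (x : G) : nu (ginv x) = nu x.
Proof. destruct Hnu as (_&_&H&_). rewrite (H x). reflexivity. Qed.
Lemma nu_mul {G : Group} nu (Hnu : cinv_pseudonorm G nu) (x y : G) : nu (gmul x y) <= nu x + nu y.
Proof. destruct Hnu as (_&_&_&H&_). apply H. Qed.
Lemma nu_conj {G : Group} nu (Hnu : cinv_pseudonorm G nu) (c x : G) : nu (gconj c x) = nu x.
Proof. destruct Hnu as (_&_&_&_&H). apply H. Qed.
Lemma nu_ge0 {G : Group} nu (Hnu : cinv_pseudonorm G nu) (x : G) : 0 <= nu x.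
Proof. destruct Hnu as (H&_). apply H. Qed.
Lemma nu_one {G : Group} nu (Hnu : cinv_pseudonorm G nu) : nu (@gone G) = 0.
Proof. destruct Hnu as (_&H&_). apply H. Qed.

Lemma comm_bound {G : Group} nu (Hnu : cinv_pseudonorm G nu) (c a b : G) :
  gcommute (gconj c a) b ->
  nu (gmul a (gmul b (gmul (ginv a) (ginv b)))) <= 4 * nu c.
Proof.
  intro Hc. set (a' := gconj c a) in *.
  set (k := gmul a (ginv a')).
  assert (Ha : a = gmul k a') by (unfold k; rewrite mulVKr; reflexivity).
  assert (E : gmul a (gmul b (gmul (ginv a) (ginv b))) = gmul k (gconj b (ginv k))).
  { rewrite Ha at 1 2. unfold gconj. rewrite invM, !gmulA.
    unfold gcommute in Hc. rewrite <- (gmulA _ k a' b), Hc, gmulA, mulKVr. reflexivity. }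
  rewrite E.
  assert (Hk : nu k <= 2 * nu c).
  { unfold k, a'. unfold gconj. rewrite !invM, invK, !gmulA.
    replace (gmul (gmul (gmul a c) (ginv a)) (ginv c)) with (gmul (gconj a c) (ginv c))
      by (unfold gconj; rewrite !gmulA; reflexivity).
    eapply Rle_trans. apply (nu_mul nu Hnu). rewrite (nu_conj nu Hnu), (nu_inv nu Hnu). lra. }
  eapply Rle_trans. apply (nu_mul nu Hnu). rewrite (nu_conj nu Hnu), (nu_inv nu Hnu). lra.
Qed.

Lemma nu_insert {G : Group} nu (Hnu : cinv_pseudonorm G nu) (x c y : G) :
  nu (gmul x (gmul c y)) <= nu c + nu (gmul x y).
Proof.
  replace (gmul x (gmul c y)) with (gmul (gconj x c) (gmul x y))
    by (unfold gconj; rewrite !gmulA, mulVKr; reflexivity).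
  eapply Rle_trans. apply (nu_mul nu Hnu). rewrite (nu_conj nu Hnu). lra.
Qed.

Lemma weval_app {G : Group} (a b : word G) n : weval (a ++ b) n = gmul (weval a n) (weval b n).
Proof. induction a as [|p a IH]; simpl. rewrite gmul1l; reflexivity.
  rewrite IH, gmulA. reflexivity. Qed.

Lemma wbar_app {G : Group} (a b : word G) : wbar (a ++ b) = wbar b ++ wbar a.
Proof. unfold wbar. rewrite map_app, rev_app_distr. reflexivity. Qed.

Lemma Int_part_opp (y : R) : (Int_part (- y) + Int_part y = 0 \/ Int_part (- y) + Int_part y = -1)%Z.
Proof.
  destruct (base_Int_part y) as [H1 H2]. destruct (base_Int_part (- y)) as [H3 H4].
  assert (A : (IZR (Int_part (- y) + Int_part y) <= 0)) by (rewrite plus_IZR; lra).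
  assert (B : (IZR (Int_part (- y) + Int_part y) > -2)) by (rewrite plus_IZR; lra).
  apply le_IZR in A. apply lt_IZR in B. lia.
Qed.

Definition wsum {G : Group} (nu : G -> R) (w : word G) : R :=
  fold_right (fun p acc => nu (fst p) + acc) 0 w.

Lemma wbar_bound {G : Group} nu (Hnu : cinv_pseudonorm G nu) (w : word G) n :
  nu (gmul (weval w n) (weval (wbar w) n)) <= wsum nu w.
Proof.
  induction w as [|[x s] w IH]; simpl.
  - rewrite gmul1l, (nu_one nu Hnu). lra.
  - change (wbar ((x, s) :: w)) with (wbar w ++ (x, - s) :: nil).
    rewrite weval_app. simpl. rewrite gmul1r.
    rewrite <- gmulA, (gmulA _ (weval w n)).
    eapply Rle_trans. apply (nu_insert nu Hnu). rewrite <- gpowZ_add.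
    rewrite Ropp_mult_distr_l_reverse.
    assert (nu (gpowZ x (Int_part (s * INR n) + Int_part (- (s * INR n)))) <= nu x).
    { rewrite Z.add_comm. destruct (Int_part_opp (s * INR n)) as [-> | ->]; simpl.
      rewrite (nu_one nu Hnu). apply (nu_ge0 nu Hnu).
      rewrite (nu_inv nu Hnu), gmul1r. lra. }
    lra.
Qed.

Lemma weval_gen {G : Group} (S : G -> Prop) (w : word G) n :
  (forall p, In p w -> gen S (fst p)) -> gen S (weval w n).
Proof.
  induction w as [|p w IH]; intro H; simpl. apply gen_one.
  apply gen_mul. apply gen_gpowZ. apply H; left; auto. apply IH; intros; apply H; right; auto.
Qed.

Lemma lim_bound (v : nat -> R) (C : R) : (forall n, 0 <= v n <= C) ->
  is_lim_seq (fun n => v n / INR n) 0.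
Proof.
  intro Hb.
  assert (Hi : forall n, 0 <= / INR n).
  { intros [|n]. simpl. rewrite Rinv_0. lra. apply Rlt_le, Rinv_0_lt_compat, lt_0_INR. lia. }
  apply is_lim_seq_le_le with (u := fun _ => 0) (w := fun n => C * / INR n).
  - intro n. specialize (Hb n). specialize (Hi n). unfold Rdiv. split.
    apply Rmult_le_pos; lra. apply Rmult_le_compat_r; lra.
  - apply is_lim_seq_const.
  - replace (Finite 0) with (Rbar_mult C (Rbar_inv p_infty)) by (simpl; f_equal; ring).
    apply is_lim_seq_scal_l. apply is_lim_seq_inv. apply is_lim_seq_INR. discriminate.
Qed.

Lemma cu_mono {G : Group} (H : G -> Prop) (hs hs' : list G) x :
  incl hs hs' -> conj_union H hs x -> conj_union H hs' x.
Proof. intros Hi Hx. destruct Hx as [gi [h [Hin [Hh E]]]]. exists gi, h. split; [apply Hi; exact Hin|]. split; assumption. Qed.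

Lemma conj_prod_gen {G : Group} (H : G -> Prop) (l : list (G * G)%type) :
  List.Forall (fun p => H (snd p)) l -> gen (conj_union H (map fst l)) (conj_prod l).
Proof.
  induction l as [|[a b] l IH]; intro HF; simpl. apply gen_one.
  inversion HF; subst. apply gen_mul.
  - apply gen_base. exists a, b. simpl in *. split. left; reflexivity. split; auto.
  - apply (gen_mono (conj_union H (map fst l))). intro x. apply cu_mono. intros y Hy; right; auto.
    auto.
Qed.

Lemma word_hs {G : Group} (H : G -> Prop) (Hfin : forall f : G, nuH_finite G H f) (w : word G) :
  exists hs, forall p, In p w -> gen (conj_union H hs) (fst p).
Proof.
  induction w as [|p w [hs IH]]. exists nil; intros p [].
  destruct (Hfin (fst p)) as [l [Hl Ep]].
  exists (map fst l ++ hs). intros q [<- | Hq].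
  - rewrite Ep. apply (gen_mono (conj_union H (map fst l))). intro x. apply cu_mono.
    intros y Hy; apply in_or_app; left; auto. apply conj_prod_gen; auto.
  - apply (gen_mono (conj_union H hs)). intro x. apply cu_mono.
    intros y Hy; apply in_or_app; right; auto. auto.
Qed.

Theorem lemma3p5 (G : Group) (HFM : satisfies_FM G) (nu : G -> R)
  (Hnu : cinv_pseudonorm G nu) (f g : word G) :
  wsim G nu (f ++ g) (g ++ f).
Proof.
  destruct HFM as [H [_ [Hfin HD]]].
  destruct (word_hs H Hfin f) as [hsf Hf].
  destruct (word_hs H Hfin g) as [hsg Hg].
  destruct (HD hsf) as [h0 Hh0]. destruct (Hh0 hsg) as [h Hh].
  set (c := gconj h h0) in *.
  assert (Key : forall x y, gen (conj_union H hsf) x -> gen (conj_union H hsg) y ->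
                gcommute (gconj c x) y).
  { intros x y Hx. revert y. induction Hx as [x Hx| |x1 x2 _ I1 _ I2|x _ I]; intros y Hy.
    - apply comm_sym. revert y Hy. apply gen_ind'.
      + apply comm_one.
      + intros; apply comm_mul; auto.
      + intros; apply comm_inv; auto.
      + intros y Hy. apply comm_sym. apply Hh; auto.
    - rewrite gconj_one. apply comm_one.
    - rewrite gconj_mul. apply comm_mul; auto.
    - rewrite gconj_inv. apply comm_inv; auto. }
  unfold wsim, wnorm_zero.
  apply lim_bound with (C := 4 * nu c + wsum nu f + wsum nu g).
  intro n. split. apply (nu_ge0 nu Hnu).
  rewrite wbar_app, !weval_app.
  set (F := weval f n). set (Gn := weval g n).
  set (Fs := weval (wbar f) n). set (Gs := weval (wbar g) n).
  assert (Hc : gcommute (gconj c F) Gn) by (apply Key; apply weval_gen; auto).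
  replace (gmul (gmul F Gn) (gmul Fs Gs)) with
    (gmul (gmul F (gmul Gn (gmul (ginv F) (ginv Gn)))) (gmul (gconj Gn (gmul F Fs)) (gmul Gn Gs)))
    by (unfold gconj; rewrite !gmulA, !mulVKr; reflexivity).
  pose proof (comm_bound nu Hnu c F Gn Hc).
  pose proof (wbar_bound nu Hnu f n). pose proof (wbar_bound nu Hnu g n).
  fold F Fs in H1. fold Gn Gs in H2.
  pose proof (nu_mul nu Hnu (gmul F (gmul Gn (gmul (ginv F) (ginv Gn)))) (gmul (gconj Gn (gmul F Fs)) (gmul Gn Gs))).
  pose proof (nu_mul nu Hnu (gconj Gn (gmul F Fs)) (gmul Gn Gs)).
  rewrite (nu_conj nu Hnu) in H4. lra.
Qed.
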